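(* Let $H$ be a simple, strongly connected digraph with at least one arc, let $k$ be a positive integer, and let $c\ge 0$. Let $T$ be a tournament with $\mathrm{ctw}(T)\le c$ that does not contain $k$ pairwise vertex-disjoint immersion copies of $H$. Then there is a set $F$ of at most $2(k-1)c$ arcs of $T$ such that $T-F$ does not contain $H$ as an immersion.
   Context: A tournament is a simple digraph with exactly one arc between every pair of distinct vertices. An immersion copy of $H$ in a digraph $G$ is a subgraph $\widehat H$ of $G$ with a map sending vertices of $H$ to distinct vertices of $\widehat H$ and each arc $(u,v)$ of $H$ to a directed path from the image of $u$ to the image of $v$, such that each arc of $\widehat H$ lies on exactly one of these paths; $G$ contains $H$ as an immersion if it has such a subgraph. For an ordering $\sigma$ (bijection $V(T)\to[|V(T)|]$) and $\alpha\in\{0,\dots,|V(T)|\}$, the $\alpha$-cut is the set of arcs $(u,v)$ with $\sigma(u)>\alpha\ge\sigma(v)$; the width of $\sigma$ is the maximum size of its cuts, and the cutwidth $\mathrm{ctw}(T)$ is the minimum width of an ordering. *)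

(* Defs.v *)
From mathcomp Require Import all_boot.
Set Implicit Arguments. Unset Strict Implicit. Unset Printing Implicit Defensive.

(* simple digraph: no loops (parallel arcs are impossible with a relation) *)
Definition simple_digraph (V : finType) (E : rel V) : Prop := irreflexive E.

Definition strongly_connected (V : finType) (E : rel V) : Prop :=
  forall u v, connect E u v.

Definition has_arc (V : finType) (E : rel V) : Prop := exists u v, E u v.

Definition tournament (V : finType) (T : rel V) : Prop :=
  irreflexive T /\ forall u v, u != v -> T u v != T v u.

Definition arcs (V : finType) (E : rel V) : {set V * V} :=
  [set a | E a.1 a.2].

Definition del_arcs (V : finType) (E : rel V) (F : {set V * V}) : rel V :=
  fun u v => E u v && ((u, v) \notin F).

Definition dipath (V : finType) (G : rel V) (x y : V) (p : seq V) : Prop :=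
  [/\ path G x p, uniq (x :: p) & last x p = y].

Definition path_arcs (V : eqType) (x : V) (p : seq V) : seq (V * V) :=
  zip (x :: p) p.

(* An immersion copy of H in G, given by the vertex map phi and, for every
   arc (u,v) of H, the path P u v (vertices after phi u) from phi u to phi v.
   The subgraph \hat H is the union of the phi-images and these paths;
   "each arc of \hat H lies on exactly one path" = the paths are pairwise
   arc-disjoint (a single directed path never repeats an arc). *)
Definition immersion_copy (VH VG : finType) (H : rel VH) (G : rel VG)
    (phi : VH -> VG) (P : VH -> VH -> seq VG) : Prop :=
  [/\ injective phi,
      (forall u v, H u v -> dipath G (phi u) (phi v) (P u v)) &
      (forall u v u' v', H u v -> H u' v' -> (u, v) != (u', v') ->
         forall a, a \in path_arcs (phi u) (P u v) ->
                   a \notin path_arcs (phi u') (P u' v'))].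

Definition copy_vertex (VH VG : finType) (H : rel VH)
    (phi : VH -> VG) (P : VH -> VH -> seq VG) (x : VG) : Prop :=
  (exists w, phi w = x) \/ (exists u v, H u v /\ x \in P u v).

Definition contains_immersion (VH VG : finType) (H : rel VH) (G : rel VG) : Prop :=
  exists (phi : VH -> VG) (P : VH -> VH -> seq VG), immersion_copy H G phi P.

Definition k_disjoint_immersions (VH VG : finType) (k : nat)
    (H : rel VH) (G : rel VG) : Prop :=
  exists (phi : 'I_k -> VH -> VG) (P : 'I_k -> VH -> VH -> seq VG),
    (forall i, immersion_copy H G (phi i) (P i)) /\
    (forall i j, i != j -> forall x,
        ~ (copy_vertex H (phi i) (P i) x /\ copy_vertex H (phi j) (P j) x)).

(* Orderings: bijections V -> 'I_#|V|; position sigma(v) in the paper is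
   (sigma v).+1 in [1, |V|]. *)
Definition ordering (V : finType) := {ffun V -> 'I_#|V|}.

Definition cut (V : finType) (T : rel V) (s : ordering V) (alpha : nat)
    : {set V * V} :=
  [set a | [&& T a.1 a.2, alpha < (s a.1).+1 & (s a.2).+1 <= alpha]].

Definition width (V : finType) (T : rel V) (s : ordering V) : nat :=
  \max_(alpha < #|V|.+1) #|cut T s alpha|.

Definition enum_ordering (V : finType) : ordering V := [ffun x => enum_rank x].

(* cutwidth: minimum width over all orderings (the bijective ones);
   enum_ordering is bijective, so the arg min ranges over a nonempty set. *)
Definition ctw (V : finType) (T : rel V) : nat :=
  width T [arg min_(s < enum_ordering V | injectiveb s) width T s].

(* Main.v *)
Require Import Defs.
From mathcomp Require Import all_boot.
From Stdlib Require Import Classical.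
From mathcomp Require Import zify.

Set Implicit Arguments. Unset Strict Implicit. Unset Printing Implicit Defensive.

Lemma path_closed (VT : finType) (G : rel VT) (q : pred VT) :
  (forall u v, G u v -> q u -> q v) ->
  forall x p, path G x p -> forall y, y \in x :: p -> q y -> q (last x p).
Proof.
move=> Hq x p; elim: p x => [|z p IH] x /=.
  by move=> _ y; rewrite inE => /eqP ->.
case/andP=> Gxz Pzp y; rewrite inE => /orP [/eqP -> qx|yin qy].
  apply: (IH z Pzp z); first by rewrite inE eqxx.
  exact: Hq Gxz qx.
exact: IH Pzp y yin qy.
Qed.

Lemma path_closed_all (VT : finType) (G : rel VT) (q : pred VT) :
  (forall u v, G u v -> q u -> q v) ->
  forall x p, path G x p -> q x -> forall y, y \in p -> q y.
Proof.
move=> Hq x p; elim: p x => [|z p IH] x //=.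
case/andP=> Gxz Pzp qx y; rewrite inE => /orP [/eqP ->|yin].
  exact: Hq Gxz qx.
exact: IH Pzp (Hq _ _ Gxz qx) y yin.
Qed.

Lemma copy_side (VH VT : finType) (H : rel VH) (G : rel VT) (q : pred VT) phi P :
  (forall u v, G u v -> q u -> q v) -> strongly_connected H ->
  immersion_copy H G phi P ->
  forall w x, copy_vertex H phi P x -> q x = q (phi w).
Proof.
move=> Hq Hsc [_ Hp _].
have arc : forall u v, H u v -> q (phi u) -> q (phi v).
  move=> u v Huv qu; have [pth _ <-] := Hp u v Huv.
  exact: (path_closed Hq pth (mem_head _ _)).
have conn : forall u v, q (phi u) -> q (phi v).
  move=> u v; have /connectP [p pth ->] := Hsc u v.
  elim: p u pth => [|z p IH] u //=.
  case/andP=> Huz pzp qu; exact: IH pzp (arc _ _ Huz qu).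
move=> w x [[w' <-]|[u [v [Huv xin]]]].
  by apply/idP/idP; apply: conn.
have [pth _ L] := Hp u v Huv.
apply/idP/idP => qx.
  apply: (conn v); rewrite -L; apply: (path_closed Hq pth _ qx).
  by rewrite inE xin orbT.
exact: (path_closed_all Hq pth (conn _ _ qx) xin).
Qed.

Lemma copy_mono (VH VT : finType) (H : rel VH) (G G' : rel VT) phi P :
  subrel G G' -> immersion_copy H G phi P -> immersion_copy H G' phi P.
Proof.
move=> sub [inj Hp Hd]; split=> // u v Huv.
have [pth U L] := Hp u v Huv; split=> //; exact: (@sub_path _ G G' sub _ _ pth).
Qed.

Definition within (VH VT : finType) (H : rel VH) (G : rel VT) (S : pred VT) :=
  exists phi P, immersion_copy H G phi P /\
                (forall x, copy_vertex H phi P x -> S x).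

Definition kdis (VH VT : finType) (H : rel VH) (T : rel VT) (m : nat)
    (S : pred VT) :=
  exists (phi : nat -> VH -> VT) (P : nat -> VH -> VH -> seq VT),
    (forall i, i < m -> immersion_copy H T (phi i) (P i) /\
                        forall x, copy_vertex H (phi i) (P i) x -> S x) /\
    (forall i j, i < m -> j < m -> i != j -> forall x,
        copy_vertex H (phi i) (P i) x -> copy_vertex H (phi j) (P j) x -> False).

Lemma ex_min (Q : nat -> Prop) : (exists n, Q n) ->
  exists n, Q n /\ forall m, m < n -> ~ Q m.
Proof.
case=> n; elim: n {-2}n (leqnn n) => [|N IH] n le Qn.
  by exists n; split=> // m; rewrite leqn0 in le; rewrite (eqP le).
case: (classic (exists m, m < n /\ Q m)) => [[m [lt Qm]]|none].
  by apply: (IH m) => //; rewrite -ltnS; apply: leq_trans lt le.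
by exists n; split=> // m lt Qm; apply: none; exists m.
Qed.

Lemma core (VH VT : finType) (H : rel VH) (T : rel VT) (s : ordering VT) (c : nat) :
  simple_digraph H -> strongly_connected H -> has_arc H ->
  injective s -> width T s <= c ->
  forall m a, ~ kdis H T m.+1 (fun x => a <= s x) ->
  exists F : {set VT * VT},
    [/\ F \subset arcs T, #|F| <= 2 * m * c &
        ~ within H (del_arcs T F) (fun x => a <= s x)].
Proof.
move=> Hsimp Hsc [u0 [v0 Huv0]] sinj sw.
have cutb : forall al, al <= #|VT| -> #|cut T s al| <= c.
  move=> al le; apply: leq_trans sw; rewrite /width.
  have le' : al < #|VT|.+1 by [].
  by rewrite (bigD1 (Ordinal le')) //= leq_maxl.
have cutsub : forall al, cut T s al \subset arcs T.
  by move=> al; apply/subsetP=> [[x y]]; rewrite !inE => /andP [].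
have delq : forall (F : {set VT * VT}) al, cut T s al \subset F ->
   forall x y, del_arcs T F x y -> al <= s x -> al <= s y.
  move=> F al sub x y /andP [Txy nF] le; rewrite leqNgt; apply/negP => lt.
  move/negP: nF; apply; apply: (subsetP sub); rewrite !inE /= Txy /=.
  by rewrite ltnS le.
have delsub : forall F, subrel (del_arcs T F) T by move=> F x y /andP [].
elim=> [|m IH] a Hk.
  exists set0; split; [exact: sub0set | by rewrite cards0 |].
  move=> [phi [P [Hc Hin]]]; apply: Hk.
  exists (fun _ => phi), (fun _ => P); split; last by move=> [|i] [|j].
  move=> i _; split=> //; exact: copy_mono (delsub _) Hc.
case: (classic (within H T (fun x => a <= s x))) => [Hw|Hnw]; last first.
  exists set0; split; [exact: sub0set | by rewrite cards0 |].
  move=> [phi [P [Hc Hin]]]; apply: Hnw; exists phi, P; split=> //.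
  exact: copy_mono (delsub _) Hc.
pose Q b := within H T (fun x => (a <= s x) && (s x < b)).
have [b [Qb bmin]] : exists b, Q b /\ forall m, m < b -> ~ Q m.
  apply: ex_min; exists #|VT|; case: Hw => phi [P [Hc Hin]].
  by exists phi, P; split=> // x xin; rewrite Hin //= ltn_ord.
have bn : b <= #|VT|.
  rewrite leqNgt; apply/negP => lt; apply: (bmin _ lt).
  case: Hw => phi [P [Hc Hin]].
  by exists phi, P; split=> // x xin; rewrite Hin //= ltn_ord.
case: Qb => phi0 [P0 [Hc0 Hin0]].
have ab : a < b.
  have /andP [] := Hin0 (phi0 u0) (or_introl (ex_intro _ u0 erefl)).
  exact: leq_ltn_trans.
have Hk' : ~ kdis H T m.+1 (fun x => b <= s x).
  move=> [phi [P [Hc Hd]]]; apply: Hk.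
  exists (fun i => if i is i'.+1 then phi i' else phi0),
         (fun i => if i is i'.+1 then P i' else P0); split.
    move=> [|i] lt /=.
      by split=> // x /Hin0 /andP [].
    have [Hci Hini] := Hc i lt; split=> // x /Hini; apply: leq_trans.
    exact: ltnW.
  move=> [|i] [|j] //= lti ltj neq x.
  - move=> /Hin0 /andP [_ lt1] /(proj2 (Hc j ltj)); rewrite leqNgt lt1 //.
  - move=> /(proj2 (Hc i lti)) le /Hin0 /andP [_ lt1]; move: le; rewrite leqNgt lt1 //.
  - exact: (Hd i j lti ltj neq x).
have [F' [F'sub F'card F'no]] := IH b Hk'.
exists (F' :|: cut T s b :|: cut T s b.-1); split.
- by rewrite !subUset F'sub !cutsub.
- rewrite cardsU; apply: leq_trans (leq_subr _ _) _.
  rewrite cardsU; apply: leq_trans (leq_add (leq_subr _ _) (leqnn _)) _.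
  have -> : 2 * m.+1 * c = 2 * m * c + c + c.
    by rewrite mulnS mulnDl -addnA addnn mul2n addnC.
  rewrite leq_add // ?leq_add ?cutb //.
  exact: leq_trans (leq_pred _) bn.
- move=> [phi [P [Hc Hin]]].
  set F := F' :|: _ :|: _ in Hc.
  have sub1 : cut T s b \subset F by apply/subsetP=> z zi; rewrite /F !in_setU zi !orbT.
  have sub2 : cut T s b.-1 \subset F by apply/subsetP=> z zi; rewrite /F !in_setU zi !orbT.
  have side1 := copy_side (delq _ _ sub1) Hsc Hc u0.
  have side2 := copy_side (delq _ _ sub2) Hsc Hc u0.
  have v0c : copy_vertex H phi P (phi v0) by left; exists v0.
  have u0c : copy_vertex H phi P (phi u0) by left; exists u0.
  case: (leqP b (s (phi u0))) => [le1|lt1].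
    apply: F'no; exists phi, P; split.
      apply: copy_mono Hc => x y /andP [Txy nF]; rewrite /del_arcs Txy /=.
      by apply: contra nF; rewrite /F !inE => ->.
    by move=> x xc; rewrite /= (side1 _ xc).
  case: (leqP b.-1 (s (phi u0))) => [le2|lt2].
    have [inj _ _] := Hc.
    have eqv : s (phi u0) = s (phi v0) :> nat.
      have h1 := side1 _ v0c; have h2 := side2 _ v0c.
      rewrite [in RHS]leqNgt lt1 /= in h1; rewrite le2 in h2.
      move/negbT: h1; rewrite -ltnNge => h1.
      have {}h2 : b.-1 <= s (phi v0) by rewrite h2.
      have hb := prednK (leq_ltn_trans (leq0n _) lt1).
      rewrite -hb !ltnS in lt1 h1.
      apply/eqP; rewrite eqn_leq; apply/andP; split; apply: leq_trans; eassumption.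
    have /sinj/inj Euv : s (phi u0) = s (phi v0) by apply: val_inj.
    by move: Huv0; rewrite Euv (Hsimp v0).
  have b0 : 0 < b by apply: leq_ltn_trans (leq0n _) lt1.
  apply: (bmin b.-1); first by rewrite prednK // ltnSn.
  exists phi, P; split; first exact: copy_mono (delsub _) Hc.
  move=> x xc; rewrite Hin //=.
  have := side2 _ xc; rewrite [in RHS]leqNgt lt2 /= => h; by rewrite ltnNge h.
Qed.

Theorem lemma17 (VH : finType) (H : rel VH) (k c : nat)
    (VT : finType) (T : rel VT) :
  simple_digraph H -> strongly_connected H -> has_arc H ->
  0 < k ->
  tournament T ->
  ctw T <= c ->
  ~ k_disjoint_immersions k H T ->
  exists F : {set VT * VT},
    [/\ F \subset arcs T,
        #|F| <= 2 * (k - 1) * c &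
        ~ contains_immersion H (del_arcs T F)].
Proof.
move=> Hsimp Hsc Harc k_gt0 _ Hctw Hnot.
move: Hctw; rewrite /ctw.
case: arg_minnP.
  by apply/injectiveP => x y; rewrite !ffunE; apply: enum_rank_inj.
move=> s /injectiveP sinj _ sw.
have Hk : ~ kdis H T (k - 1).+1 (fun x => 0 <= s x).
  rewrite subn1 prednK //.
  move=> [phi [P [Hc Hd]]]; apply: Hnot.
  exists (fun i : 'I_k => phi i), (fun i : 'I_k => P i); split.
    by move=> i; case: (Hc i (ltn_ord i)).
  move=> i j neq x [xi xj]; exact: (Hd i j (ltn_ord i) (ltn_ord j) neq x xi xj).
have [F [Fsub Fcard Fno]] := core Hsimp Hsc Harc sinj sw Hk.
exists F; split=> // [[phi [P Hc]]]; apply: Fno; exists phi, P; split=> //.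
Qed.
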